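(* Define polynomials in one variable $m$ by \[{}^{\mathsf{NF}}\!P_0(m)=m,\qquad {}^{\mathsf{NF}}\!P_{n+1}(m)={}^{\mathsf{NF}}\!P_n(m+1)+{}^{\mathsf{NF}}\!Q_{n+1}(m),\] \[{}^{\mathsf{NF}}\!Q_0(m)=m,\qquad {}^{\mathsf{NF}}\!Q_{n+1}(m)=\sum_{k=0}^{n}{}^{\mathsf{NF}}\!P_k(m)\,{}^{\mathsf{NF}}\!Q_{n-k}(m).\] Then for every $n\ge 0$, the degrees of ${}^{\mathsf{NF}}\!P_n$ and of ${}^{\mathsf{NF}}\!Q_n$ are both equal to $n+1$.
   Context: ${}^{\mathsf{NF}}\!P_n(m)$ counts beta-normal forms of size $n$ (de Bruijn indices of size $0$, abstraction and application of size $1$) with at most $m$ distinct free indices, and ${}^{\mathsf{NF}}\!Q_n(m)$ counts neutral normal forms (those headed by an index) of size $n$ with at most $m$ distinct free indices; this interpretation is not needed for the claim. *)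

(* Defs.v *)
From HB Require Import structures.
From mathcomp Require Import all_boot all_order all_algebra.
Set Implicit Arguments. Unset Strict Implicit. Unset Printing Implicit Defensive.
Import GRing.Theory.
Local Open Scope ring_scope.

(* NFPQ n = ([:: P_0; ...; P_n], [:: Q_0; ...; Q_n]) with integer coefficients. *)
Fixpoint NFPQ (n : nat) : seq {poly int} * seq {poly int} :=
  match n with
  | 0 => ([:: 'X], [:: 'X])
  | n'.+1 =>
      let ps := (NFPQ n').1 in
      let qs := (NFPQ n').2 in
      let q := \sum_(k < n'.+1) ps`_k * qs`_(n' - k) in
      let p := (ps`_n') \Po ('X + 1) + q in
      (rcons ps p, rcons qs q)
  end.

Definition NFP (n : nat) : {poly int} := (NFPQ n).1`_n.
Definition NFQ (n : nat) : {poly int} := (NFPQ n).2`_n.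

(* Main.v *)
Require Import Defs.
From HB Require Import structures.
From mathcomp Require Import all_boot all_order all_algebra.
From mathcomp Require Import zify.
Import GRing.Theory Num.Theory.
Local Open Scope ring_scope.

Lemma NFPQ_size n : size (NFPQ n).1 = n.+1 /\ size (NFPQ n).2 = n.+1.
Proof. by elim: n => [|n [IH1 IH2]] //=; rewrite !size_rcons IH1 IH2. Qed.

Lemma NFPQ_nth n k : (k <= n)%N -> (NFPQ n).1`_k = NFP k /\ (NFPQ n).2`_k = NFQ k.
Proof.
elim: n => [|n IH] hk; first by move: hk; rewrite leqn0 => /eqP ->.
case: (ltngtP k n.+1) => [hlt|hgt|->]; [|by rewrite ltnNge hk in hgt|by []].
have [s1 s2] := NFPQ_size n.
rewrite /= !nth_rcons s1 s2 hlt; exact: IH.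
Qed.

Lemma NFQ_S n : NFQ n.+1 = \sum_(k < n.+1) NFP k * NFQ (n - k).
Proof.
have [s1 s2] := NFPQ_size n.
rewrite /NFQ /= nth_rcons s2 ltnn eqxx; apply: eq_bigr => k _.
have hk := ltn_ord k.
rewrite (@NFPQ_nth n k hk).1.
by rewrite (@NFPQ_nth n (n - k)%N (leq_subr k n)).2.
Qed.

Lemma NFP_S n : NFP n.+1 = NFP n \Po ('X + 1) + NFQ n.+1.
Proof.
have [s1 s2] := NFPQ_size n.
rewrite NFQ_S /NFP /= nth_rcons s1 ltnn eqxx; congr (_ + _).
apply: eq_bigr => k _.
have hk := ltn_ord k.
rewrite (@NFPQ_nth n k hk).1.
by rewrite (@NFPQ_nth n (n - k)%N (leq_subr k n)).2.
Qed.


Definition good (n : nat) (p : {poly int}) := size p = n.+2 /\ 0 < lead_coef p.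

Lemma sum_good (s : nat) (m : nat) (F : 'I_m.+1 -> {poly int}) :
  (forall i, good s (F i)) -> good s (\sum_(i < m.+1) F i).
Proof.
move=> hF.
have H : (size (\sum_(i < m) F (lift ord0 i))%R <= s.+2)%N /\
         0 <= (\sum_(i < m) F (lift ord0 i))`_s.+1.
  apply: (big_ind (fun p : {poly int} => (size p <= s.+2)%N /\ 0 <= p`_s.+1)).
  - by rewrite size_poly0 coef0.
  - move=> p q [h1 h2] [h3 h4]; split.
      by apply: leq_trans (size_polyD _ _) _; rewrite geq_max h1 h3.
    by rewrite coefD addr_ge0.
  - move=> i _; have [h1 h2] := hF (lift ord0 i); rewrite h1; split => //.
    by move: h2; rewrite lead_coefE h1 => /Order.POrderTheory.ltW.
rewrite big_ord_recl.
have [h1 h2] := hF ord0.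
move: H; set q := \sum_(i < m) _ => -[h3 h4].
have hc : 0 < (F ord0 + q)`_s.+1.
  by rewrite coefD; apply: ltr_wpDr => //; move: h2; rewrite lead_coefE h1.
have hs : size (F ord0 + q) = s.+2.
  apply/eqP; rewrite eqn_leq; apply/andP; split.
    apply: leq_trans (size_polyD _ _) _; rewrite geq_max h1 h3 leqnn; exact: isT.
  rewrite ltnNge; apply/negP => hle.
  by move: hc; rewrite nth_default // Order.POrderTheory.ltxx.
by split => //; rewrite lead_coefE hs.
Qed.

Lemma good_all n : good n (NFP n) /\ good n (NFQ n).
Proof.
elim/ltn_ind: n => -[|n] IH.
  rewrite /good /NFP /NFQ /= size_polyX lead_coefX; by [].
have hQ : good n.+1 (NFQ n.+1).
  rewrite NFQ_S; apply: sum_good => k.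
  have hk := ltn_ord k.
  have [[a1 a2] _] := IH k (leq_trans hk (leqnn _)).
  have [_ [b1 b2]] := IH (n - k)%N (leq_ltn_trans (leq_subr k n) (ltnSn n)).
  have pn0 : NFP k != 0 by rewrite -size_poly_eq0 a1.
  have qn0 : NFQ (n - k)%N != 0 by rewrite -size_poly_eq0 b1.
  split; first by rewrite size_mul // a1 b1; lia.
  by rewrite lead_coefM mulr_gt0.
split => //.
have [[a1 a2] _] := IH n (ltnSn n).
have [c1 c2] := hQ.
have hs : (size (NFP n \Po ('X + 1)) < size (NFQ n.+1))%N.
  by rewrite -polyC1 size_comp_poly2 ?size_XaddC // a1 c1.
by rewrite NFP_S /good addrC size_polyDl // lead_coefDl.
Qed.

Theorem lemma3 (n : nat) :
  (size (NFP n)).-1 = n.+1 /\ (size (NFQ n)).-1 = n.+1.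
Proof. by have [[-> _] [-> _]] := good_all n. Qed.
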